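(* Let $\ell\geq 1$ be an integer, $m=2\ell+1$, $u=(3^m+1)/2$ and $v=2\cdot 3^{\ell}+1$. Let $\pi$ be a generator of $\mathrm{GF}(3^m)^*$, and let $\mathcal{C}_{(u,v)}$ be the cyclic code of length $3^m-1$ over $\mathrm{GF}(3)$ with generator polynomial $m_u(x)m_v(x)$. Then $\pi^u$ and $\pi^v$ are not conjugate over $\mathrm{GF}(3)$, and $\mathcal{C}_{(u,v)}$ has parameters $[3^m-1,\,3^m-1-2m,\,4]$, i.e. it has dimension $3^m-1-2m$ and minimum Hamming distance exactly $4$. (In particular it is optimal: by the Sphere Packing bound no linear code over $\mathrm{GF}(3)$ of length $3^m-1$ and dimension $3^m-1-2m$ has minimum distance greater than $4$.)
   Context: $\mathrm{GF}(q)$ denotes the finite field with $q$ elements. For $0\le i\le 3^m-2$, $m_i(x)$ denotes the minimal polynomial of $\pi^i$ over $\mathrm{GF}(3)$. A cyclic code of length $n$ over $\mathrm{GF}(3)$ is identified with an ideal of $\mathrm{GF}(3)[x]/(x^n-1)$, and the code with generator polynomial $g(x)$ (a divisor of $x^n-1$) is the ideal $\langle g(x)\rangle$, i.e. the set of vectors $(c_0,\dots,c_{n-1})\in\mathrm{GF}(3)^n$ such that $g(x)$ divides $\sum_i c_ix^i$. Equivalently here, $\mathcal{C}_{(u,v)}=\{(c_0,\dots,c_{3^m-2})\in\mathrm{GF}(3)^{3^m-1}:\ \sum_i c_i\pi^{ui}=0,\ \sum_i c_i\pi^{vi}=0\}$. An $[n,k,d]$ code is a linear code of length $n$, dimension $k$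 and minimum Hamming distance $d$. *)

(* Defs.v *)
From HB Require Import structures.
From mathcomp Require Import all_boot all_order all_algebra all_field.
Set Implicit Arguments. Unset Strict Implicit. Unset Printing Implicit Defensive.
Import GRing.Theory.
Local Open Scope ring_scope.

(* Elements of GF(3) are 'F_3; they are cast into F (a field of characteristic 3)
   via their natural-number representative, which is the prime-field embedding. *)
Definition f3toF (F : finFieldType) (a : 'F_3) : F := (a : nat)%:R.

Definition conjugate3 (F : finFieldType) (x y : F) : Prop :=
  exists j : nat, y = x ^+ (3 ^ j).

Definition code_uv (F : finFieldType) (n : nat) (pi : F) (u v : nat)
  : {set 'rV['F_3]_n} :=
  [set c : 'rV['F_3]_n |
     (\sum_(i < n) f3toF F (c ord0 i) * pi ^+ (u * i) == 0) &&
     (\sum_(i < n) f3toF F (c ord0 i) * pi ^+ (v * i) == 0)].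

Definition code_dim (n : nat) (C : {set 'rV['F_3]_n}) : nat :=
  \dim <<enum C>>%VS.

Definition hamming (n : nat) (c d : 'rV['F_3]_n) : nat :=
  #|[set i : 'I_n | c ord0 i != d ord0 i]|.

Definition min_dist_is (n : nat) (C : {set 'rV['F_3]_n}) (dd : nat) : Prop :=
  (exists c d, [/\ c \in C, d \in C, c != d & hamming c d = dd]) /\
  (forall c d, c \in C -> d \in C -> c != d -> (dd <= hamming c d)%N).

(* Main.v *)
Require Import Defs.
From HB Require Import structures.
From mathcomp Require Import all_boot all_order all_fingroup all_algebra all_field.
From mathcomp Require Import ring zify.
Set Implicit Arguments. Unset Strict Implicit. Unset Printing Implicit Defensive.
Import GRing.Theory.
Local Open Scope ring_scope.

Section Char3.
Variable F : fieldType.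
Hypothesis pc : 3%N \in [pchar F].

Lemma three0 : (3%:R : F) = 0. Proof. exact: pcharf0 pc. Qed.

Lemma red1 (P H K M : F) : H = 0 -> P = H * K + 3%:R * M -> P = 0.
Proof. by move=> -> ->; rewrite three0 !mul0r addr0. Qed.

Lemma redE (x y H K M : F) : H = 0 -> x - y = H * K + 3%:R * M -> x = y.
Proof. by move=> hH e; apply/eqP; rewrite -subr_eq0 (red1 hH e). Qed.

Lemma red2 (P H1 H2 K1 K2 M : F) : H1 = 0 -> H2 = 0 ->
  P = H1 * K1 + H2 * K2 + 3%:R * M -> P = 0.
Proof. by move=> -> -> ->; rewrite three0 !mul0r !addr0. Qed.

Lemma frobD k (x y : F) : (x + y) ^+ (3 ^ k) = x ^+ (3 ^ k) + y ^+ (3 ^ k).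
Proof.
apply: exprDn_pchar; rewrite (eq_pnat _ (pcharf_eq pc)).
by rewrite pnatX pnat_id.
Qed.

Lemma frobN k (x : F) : (- x) ^+ (3 ^ k) = - x ^+ (3 ^ k).
Proof.
apply: exprNn_pchar; rewrite (eq_pnat _ (pcharf_eq pc)).
by rewrite pnatX pnat_id.
Qed.

Lemma frobB k (x y : F) : (x - y) ^+ (3 ^ k) = x ^+ (3 ^ k) - y ^+ (3 ^ k).
Proof. by rewrite frobD frobN. Qed.

Lemma frob_inj k (x y : F) : x ^+ (3 ^ k) = y ^+ (3 ^ k) -> x = y.
Proof.
move=> h; have : (x - y) ^+ (3 ^ k) == 0 by rewrite frobB h subrr.
by rewrite expf_eq0 expn_gt0 /= subr_eq0 => /eqP.
Qed.

Variable l : nat.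
Hypothesis hfin : forall x : F, x ^+ (3 ^ (2 * l + 1)) = x.
Local Notation q := (3 ^ l)%N.
Local Notation v := (2 * 3 ^ l + 1)%N.

Lemma expv (x : F) : x ^+ v = x * (x ^+ q) ^+ 2.
Proof. by rewrite exprD expr1 mulnC exprM mulrC. Qed.

Lemma frob2 (x : F) : x ^+ q = x -> x ^+ 3 = x.
Proof.
move=> h; have h2 : x ^+ (3 ^ (2 * l)) = x by rewrite mul2n -addnn expnD exprM h h.
by rewrite -{2}(hfin x) addn1 expnSr exprM h2.
Qed.

Lemma cubic (t : F) : t ^+ 3 = t -> [\/ t = 0, t = 1 | t = -1].
Proof.
move=> h; have : t * (t - 1) * (t + 1) = 0.
  have -> : t * (t - 1) * (t + 1) = t ^+ 3 - t by ring.
  by rewrite h subrr.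
move/eqP; rewrite !mulf_eq0 subr_eq0 addr_eq0 => /orP[/orP[]|] /eqP ->;
by [constructor 1 | constructor 2 | constructor 3].
Qed.

Lemma L0 (A B C : F) : A + B + C = 0 -> A != 0 -> B != 0 -> C != 0 ->
  A ^+ v + B ^+ v + C ^+ v = 0 -> A = B.
Proof.
move=> hs nA nB nC.
have hC : C = - (A + B) by apply/eqP; rewrite -addr_eq0 addrC hs.
rewrite !expv hC frobN frobD.
set P := A ^+ q; set Q := B ^+ q => H.
have : (Q - P) * (A * Q - B * P) = 0.
  by apply: (red1 (K := -1) (M := - ((A + B) * P * Q)) H); ring.
move/eqP; rewrite mulf_eq0 !subr_eq0 => /orP[/eqP hQP | /eqP hAB].
  by apply: (@frob_inj l); rewrite -/P -/Q hQP.
have nQ : Q != 0 by rewrite expf_eq0 negb_and nB orbT.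
have ht : (A / B) ^+ q = A / B.
  rewrite exprMn exprVn -/P -/Q; apply/eqP.
  by rewrite eqr_div // mulrC -hAB mulrC.
case: (cubic (frob2 ht)) => /eqP.
- by rewrite mulf_eq0 invr_eq0 (negbTE nA) (negbTE nB).
- by move/eqP/divr1_eq.
- rewrite -(inj_eq (mulIf nB)) -mulrA mulVf // mulr1 mulNr mul1r => /eqP hA.
  by move: nC; rewrite hC hA addNr oppr0 eqxx.
Qed.

Lemma pow27 (r : F) k : r ^+ 27 = r -> r ^+ (3 ^ k) = r ^+ (3 ^ (k %% 3)).
Proof.
move=> h; have h' : r ^+ (3 ^ 3) = r := h.
have hj j : r ^+ ((3 ^ 3) ^ j) = r.
  by elim: j => [|j IH]; rewrite ?expr1 // expnS mulnC exprM IH h'.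
by rewrite {1}(divn_eq k 3) expnD [(_ %/ 3 * 3)%N]mulnC expnM exprM hj.
Qed.

Lemma L1 (A B C : F) : A + B + C = 0 -> A != 0 -> B != 0 -> C != 0 ->
  A ^+ v + B ^+ v = C ^+ v -> False.
Proof.
move=> hs nA nB nC E0.
set b := B - A.
have hA : A = C + b.
  by apply: (redE (K := -1) (M := A) hs); rewrite /b; ring.
have hB : B = C - b.
  by apply: (redE (K := -1) (M := B) hs); rewrite /b; ring.
have E : (C + b) ^+ v + (C - b) ^+ v - C ^+ v = 0 by rewrite -hA -hB E0 subrr.
rewrite !expv frobD frobB in E.
set P := C ^+ q in E; set Q := b ^+ q in E.
have T : C * P ^+ 2 - C * Q ^+ 2 + b * P * Q = 0.
  by apply: (red1 (K := 1) (M := - (C * Q ^+ 2 + b * P * Q)) E); ring.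
have nP : P != 0 by rewrite expf_eq0 negb_and nC orbT.
have nb : b != 0.
  apply/negP => /eqP hb; have hQ : Q = 0 by rewrite /Q hb expr0n expn_eq0.
  move: T; rewrite hQ hb expr0n /= !mulr0 ?mul0r subr0 addr0 => /eqP.
  by rewrite mulf_eq0 (negbTE nC) /= (negbTE (expf_neq0 2 nP)).
set r := b / C.
have nr : r != 0 by rewrite mulf_eq0 invr_eq0 negb_or nb nC.
set s := r ^+ q.
have hs' : s = Q / P by rewrite /s /r exprMn exprVn.
have E1 : r * s = s ^+ 2 - 1.
  apply/eqP; rewrite -subr_eq0; apply/eqP.
  have -> : r * s - (s ^+ 2 - 1) = (C * P ^+ 2 - C * Q ^+ 2 + b * P * Q) / (C * P ^+ 2).
    by rewrite hs' /r; field; rewrite nC nP.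
  by rewrite T mul0r.
set w := r ^+ (3 ^ (2 * l)).
have hsw : s ^+ q = w by rewrite /s -exprM -expnD addnn -mul2n.
have hw3 : w ^+ 3 = r by have := hfin r; rewrite addn1 expnSr exprM.
have E2 : s * w = w ^+ 2 - 1.
  by rewrite -hsw -exprMn -exprAC -[1](expr1n _ q) -frobB -E1 exprMn.
set S := s ^+ 3.
have E2' : S * r = r ^+ 2 - 1.
  have := congr1 (fun x => x ^+ (3 ^ 1)) E2; rewrite frobB expr1n expn1.
  by rewrite exprMn exprAC hw3.
have E1' : r ^+ 3 * S = S ^+ 2 - 1.
  have := congr1 (fun x => x ^+ (3 ^ 1)) E1; rewrite frobB expr1n expn1.
  by rewrite exprMn exprAC.
have D : r ^+ 4 * (r ^+ 2 - 1) - ((r ^+ 2 - 1) ^+ 2 - r ^+ 2) = 0.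
  rewrite -E2'; transitivity ((r ^+ 3 * S) * r ^+ 2 - (S ^+ 2 - 1) * r ^+ 2).
    ring.
  by rewrite E1' subrr.
set y := r ^+ 2.
have H3 : y ^+ 3 + y ^+ 2 - 1 = 0.
  by apply: (red1 (K := 1) (M := r ^+ 4 - r ^+ 2) D); rewrite /y; ring.
have y13 : y ^+ 13 - 1 = 0.
  apply: (red1 (K := (4)*y^+0 + (-3%:R)*y^+1 + (1)*y^+2 + (1)*y^+3 + (-2%:R)*y^+4 + (2)*y^+5 + (-1%:R)*y^+6 + (1)*y^+8 + (-1%:R)*y^+9 + (1)*y^+10)
                (M := (1)*y^+0 + (-1%:R)*y^+1 + (-1%:R)*y^+2) H3).
  ring.
have r27 : r ^+ 27 = r.
  have : y ^+ 13 = 1 by apply/eqP; rewrite -subr_eq0 y13.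
  by rewrite /y -exprM => h; rewrite (exprSr r 26) h mul1r.
have one0 : (1 : F) != 0 := oner_neq0 F.
move: E1; rewrite /s (pow27 _ r27).
case: (l %% 3)%N (ltn_mod l 3) => [|[|[|//]]] _ /= E1.
- by move: E1; rewrite expr1 -expr2 => /eqP; rewrite -subr_eq0 opprB addrC subrK; apply/negP.
- have e : y ^+ 2 - y ^+ 3 + 1 = 0.
    by rewrite /y; transitivity (r * r ^+ 3 - ((r ^+ 3) ^+ 2 - 1)); [ring | rewrite E1 subrr].
  have : (1 : F) = 0.
    by apply: (red2 (K1 := -(y + 2%:R)) (K2 := -(y+1)) (M := (y + 1) * y ^+ 2) H3 e); ring.
  by move/eqP; rewrite (negbTE one0).
- have e : y ^+ 5 - y ^+ 9 + 1 = 0.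
    by rewrite /y; transitivity (r * r ^+ 9 - ((r ^+ 9) ^+ 2 - 1)); [ring | rewrite E1 subrr].
  have e2 : y ^+ 2 - 1 = 0.
    apply: (red2 (K1 := (3)*y^+0 + (-3%:R)*y^+1 + (2)*y^+2 + (-1%:R)*y^+4 + (1)*y^+5 + (-1%:R)*y^+6)
                 (K2 := -1) (M := (1)*y^+0 + (-1%:R)*y^+1) H3 e); ring.
  have : (1 : F) = 0.
    by apply: (red2 (K1 := y) (K2 := -(y * (y + 1)) - 1) (M := 0) H3 e2); ring.
  by move/eqP; rewrite (negbTE one0).
Qed.
End Char3.


Section NatFacts.
Variable l : nat.
Hypothesis l1 : (1 <= l)%N.
Local Notation m := (2 * l + 1)%N.
Local Notation n := (3 ^ m).-1.
Local Notation h := (n %/ 2)%N.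

Lemma pow3m : (3 ^ m = 3 * 9 ^ l)%N.
Proof. by rewrite expnD expnM mulnC. Qed.

Lemma nine_mod4 : (9 ^ l %% 4 = 1)%N.
Proof. by rewrite -modnXm /= modn_small ?exp1n // ltnS exp1n. Qed.

Lemma nine_ge : (9 <= 9 ^ l)%N.
Proof. by rewrite -{1}(expn1 9) leq_pexp2l. Qed.

Lemma n_eq : n = (2 * h)%N.
Proof. rewrite pow3m; have := nine_mod4; have := nine_ge; lia. Qed.

Lemma u_eq : ((3 ^ m + 1) %/ 2)%N = (h + 1)%N.
Proof. rewrite pow3m; have := nine_mod4; have := nine_ge; lia. Qed.

Lemma h_odd : odd h.
Proof.
have H : (h %% 2 = 1)%N by rewrite pow3m; have := nine_mod4; have := nine_ge; lia.
by move: H; rewrite modn2; case: (odd _).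
Qed.

Lemma n_ge : (26 <= n)%N.
Proof. rewrite pow3m; have := nine_ge; lia. Qed.

End NatFacts.


Section FieldFacts.
Variables (l : nat) (F : finFieldType) (pi : F).
Hypothesis l1 : (1 <= l)%N.
Hypothesis cardF : #|F| = (3 ^ (2 * l + 1))%N.
Hypothesis prim : (3 ^ (2 * l + 1)).-1.-primitive_root pi.
Local Notation m := (2 * l + 1)%N.
Local Notation n := (3 ^ m).-1.
Local Notation h := (n %/ 2)%N.
Local Notation u := ((3 ^ m + 1) %/ 2)%N.
Local Notation v := (2 * 3 ^ l + 1)%N.

Lemma pcF : 3%N \in [pchar F].
Proof. exact: card_finPcharP cardF isT. Qed.

Lemma hfinF (x : F) : x ^+ (3 ^ m) = x.
Proof. by rewrite -cardF expf_card. Qed.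

Lemma pin : pi ^+ n = 1. Proof. exact: prim_expr_order prim. Qed.

Lemma pi_neq0 : pi != 0.
Proof.
apply/negP => /eqP p0; have := pin; rewrite p0 expr0n.
by have := n_ge l1; case: n => // k _ /eqP; rewrite eq_sym oner_eq0.
Qed.

Lemma pi_inj (i j : nat) : (i < n)%N -> (j < n)%N -> pi ^+ i = pi ^+ j -> i = j.
Proof.
move=> hi hj /eqP; rewrite (eq_prim_root_expr prim) !modn_small //.
by move/eqP.
Qed.

Lemma two_neq0 : (2%:R : F) != 0.
Proof.
have -> : (2%:R : F) = -1.
  by apply: (redE pcF (H := 0) (K := 0) (M := 1)) => //; ring.
by rewrite oppr_eq0 oner_eq0.
Qed.

Lemma one_neq_m1 : (1 : F) != -1.
Proof.
apply/negP => /eqP e; have : (2%:R : F) = 0 by rewrite mulr2n {2}e subrr.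
by move/eqP; rewrite (negbTE two_neq0).
Qed.

Lemma pih : pi ^+ h = -1.
Proof.
have hn := n_eq l1; have hge := n_ge l1.
have e2 : (pi ^+ h) ^+ 2 = 1 by rewrite -exprM mulnC -hn pin.
have : (pi ^+ h - 1) * (pi ^+ h + 1) = 0.
  have -> : (pi ^+ h - 1) * (pi ^+ h + 1) = (pi ^+ h) ^+ 2 - 1 by ring.
  by rewrite e2 subrr.
move/eqP; rewrite mulf_eq0 subr_eq0 addr_eq0 => /orP[/eqP e1|/eqP //].
have : (n %| h)%N by rewrite (prim_order_dvd prim) e1.
move/dvdn_leq; rewrite hn; lia.
Qed.

Lemma piu i : pi ^+ (u * i) = (-1) ^+ i * pi ^+ i.
Proof. by rewrite (u_eq l1) mulnDl mul1n exprD exprM pih. Qed.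

Lemma eta_neg i j : pi ^+ j = - pi ^+ i -> (-1) ^+ j = - (-1 : F) ^+ i.
Proof.
move=> e.
have L k : (pi ^+ k) ^+ h = (-1) ^+ k by rewrite -exprM mulnC exprM pih.
have := congr1 (fun x => x ^+ h) e; rewrite /= (L j) (exprNn (pi ^+ i)) (L i).
by rewrite -[(-1 : F) ^+ h]signr_odd (h_odd l1) expr1 mulN1r.
Qed.

Lemma nonconj : ~ conjugate3 (pi ^+ u) (pi ^+ v).
Proof.
case=> j e.
have L k : (pi ^+ k) ^+ h = (-1) ^+ k by rewrite -exprM mulnC exprM pih.
have R : ((pi ^+ u) ^+ (3 ^ j)) ^+ h = 1.
  rewrite exprAC [(pi ^+ u) ^+ h]exprAC pih -signr_odd (u_eq l1) addn1 /=.
  by rewrite (h_odd l1) /= expr1n.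
have Lv : (pi ^+ v) ^+ h = -1.
  by rewrite (L v) -signr_odd addn1 /= oddM /= expr1.
have := congr1 (fun x => x ^+ h) e; rewrite /= R Lv.
by move/eqP; rewrite eq_sym (negbTE one_neq_m1).
Qed.

End FieldFacts.


Section Core.
Variable F : fieldType.
Hypothesis pc : 3%N \in [pchar F].
Variable l : nat.
Hypothesis hfin : forall x : F, x ^+ (3 ^ (2 * l + 1)) = x.
Local Notation v := (2 * 3 ^ l + 1)%N.

Definition pm1 (e : F) := e = 1 \/ e = -1.

Lemma pm1_sq e : pm1 e -> e * e = 1.
Proof. by case=> ->; rewrite ?mulr1 ?mulrNN ?mulr1. Qed.

Lemma pm1_neq0 e : pm1 e -> e != 0.
Proof. by case=> ->; rewrite ?oppr_eq0 oner_eq0. Qed.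

Lemma pm1M e f : pm1 e -> pm1 f -> pm1 (e * f).
Proof.
by case=> -> [] ->; rewrite ?mulr1 ?mul1r ?mulrNN ?mulr1 ?mulN1r; [left|right|right|left].
Qed.

Lemma pm1_expv e : pm1 e -> e ^+ v = e.
Proof.
case=> ->; first by rewrite expr1n.
by rewrite -signr_odd addn1 /= oddM /= expr1.
Qed.

Lemma keyA (c s x : F) : pm1 c -> pm1 s -> c * x ^+ v = s * (c * s * x) ^+ v.
Proof.
move=> hc hs; rewrite exprMn (pm1_expv (pm1M hc hs)) mulrA.
by rewrite [s * (c * s)]mulrCA (pm1_sq hs) mulr1.
Qed.

Lemma keyX (c s x : F) : pm1 c -> pm1 s -> x = c * s * (c * s * x).
Proof. by move=> hc hs; rewrite mulrA (pm1_sq (pm1M hc hs)) mul1r. Qed.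

Lemma two_pm1 (c1 c2 c3 : F) : pm1 c1 -> pm1 c2 -> pm1 c3 ->
  [\/ c1 = c2, c1 = c3 | c2 = c3].
Proof.
by case=> -> [] -> [] ->; (try by constructor 1); (try by constructor 2); constructor 3.
Qed.

Lemma core3 (x1 x2 x3 c1 c2 c3 s1 s2 s3 : F) :
  x1 != x2 -> x1 != x3 -> x2 != x3 -> x1 != 0 -> x2 != 0 -> x3 != 0 ->
  pm1 c1 -> pm1 c2 -> pm1 c3 -> pm1 s1 -> pm1 s2 -> pm1 s3 ->
  c1 * s1 * x1 + c2 * s2 * x2 + c3 * s3 * x3 = 0 ->
  c1 * x1 ^+ v + c2 * x2 ^+ v + c3 * x3 ^+ v = 0 -> False.
Proof.
move=> n12 n13 n23 n1 n2 n3 hc1 hc2 hc3 hs1 hs2 hs3.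
rewrite (keyA x1 hc1 hs1) (keyA x2 hc2 hs2) (keyA x3 hc3 hs3).
set A1 := c1 * s1 * x1; set A2 := c2 * s2 * x2; set A3 := c3 * s3 * x3.
have ex1 : x1 = c1 * s1 * A1 := keyX x1 hc1 hs1.
have ex2 : x2 = c2 * s2 * A2 := keyX x2 hc2 hs2.
have ex3 : x3 = c3 * s3 * A3 := keyX x3 hc3 hs3.
have nA1 : A1 != 0 by rewrite /A1 !mulf_neq0 // pm1_neq0.
have nA2 : A2 != 0 by rewrite /A2 !mulf_neq0 // pm1_neq0.
have nA3 : A3 != 0 by rewrite /A3 !mulf_neq0 // pm1_neq0.
move=> hs.
have hs132 : A1 + A3 + A2 = 0 by rewrite -addrA [A3 + A2]addrC addrA.
have hs231 : A2 + A3 + A1 = 0 by rewrite addrC addrA.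
have allEq (s : F) : pm1 s -> s1 = s -> s2 = s -> s3 = s ->
    A1 ^+ v + A2 ^+ v + A3 ^+ v = 0 -> False.
  move=> hs' e1 e2 e3 E.
  have a12 := L0 pc hfin hs nA1 nA2 nA3 E.
  have a13 : A1 = A3.
    by apply: (L0 pc hfin hs132 nA1 nA3 nA2); rewrite -E; ring.
  move: n12 n13 n23; rewrite ex1 ex2 ex3 -a12 -a13 e1 e2 e3.
  by case: (two_pm1 hc1 hc2 hc3) => ->; rewrite eqxx // andbF.
case: (hs1) => e1; case: (hs2) => e2; case: (hs3) => e3; rewrite e1 e2 e3 => E.
- by apply: (allEq 1) => //; [left | move: E; rewrite !mul1r].
- by apply: (L1 pc hfin hs nA1 nA2 nA3); apply: (redE pc (K := 1) (M := 0) E); ring.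
- by apply: (L1 pc hfin hs132 nA1 nA3 nA2); apply: (redE pc (K := 1) (M := 0) E); ring.
- by apply: (L1 pc hfin hs231 nA2 nA3 nA1); apply: (redE pc (K := -1) (M := 0) E); ring.
- by apply: (L1 pc hfin hs231 nA2 nA3 nA1); apply: (redE pc (K := 1) (M := 0) E); ring.
- by apply: (L1 pc hfin hs132 nA1 nA3 nA2); apply: (redE pc (K := -1) (M := 0) E); ring.
- by apply: (L1 pc hfin hs nA1 nA2 nA3); apply: (redE pc (K := -1) (M := 0) E); ring.
- apply: (allEq (-1)) => //; first by right.
  by apply: (red1 pc (K := -1) (M := 0) E); ring.
Qed.

Lemma oddv_neg (x : F) : (- x) ^+ v = - x ^+ v.
Proof. by rewrite exprNn -signr_odd addn1 /= oddM /= expr1 mulN1r. Qed.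

Lemma pm1_cases (c1 c2 : F) : pm1 c1 -> pm1 c2 -> c1 = c2 \/ c1 = - c2.
Proof. by case=> -> [] ->; rewrite ?opprK; [left|right|right|left]. Qed.

Lemma self_neg (s : F) : pm1 s -> s = - s -> False.
Proof.
move=> hs e; have : s * 3%:R = 0 by rewrite three0 // mulr0.
have -> : s * 3%:R = s - (- s) + s by ring.
rewrite -e subrr add0r => /eqP; apply/negP; exact: pm1_neq0.
Qed.

Lemma core2 (x1 x2 c1 c2 s1 s2 : F) :
  x1 != x2 -> x1 != 0 -> x2 != 0 ->
  pm1 c1 -> pm1 c2 -> pm1 s1 -> pm1 s2 ->
  (x2 = - x1 -> s2 = - s1) ->
  c1 * s1 * x1 + c2 * s2 * x2 = 0 ->
  c1 * x1 ^+ v + c2 * x2 ^+ v = 0 -> False.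
Proof.
move=> n12 n1 n2 hc1 hc2 hs1 hs2 eta.
rewrite (keyA x1 hc1 hs1) (keyA x2 hc2 hs2).
set A1 := c1 * s1 * x1; set A2 := c2 * s2 * x2.
have ex1 : x1 = c1 * s1 * A1 := keyX x1 hc1 hs1.
have ex2 : x2 = c2 * s2 * A2 := keyX x2 hc2 hs2.
have nA1 : A1 != 0 by rewrite /A1 !mulf_neq0 // pm1_neq0.
move=> /eqP; rewrite addr_eq0 => /eqP hA2 E.
have nA2 : A2 != 0 by rewrite /A2 !mulf_neq0 // pm1_neq0.
have es : s2 = s1.
  move: E; rewrite hA2 oddv_neg mulrN addrC -mulrBl => /eqP.
  rewrite mulf_eq0 expf_eq0 (negbTE nA2) andbF orbF subr_eq0.
  by move/eqP.
move: n12 eta; rewrite ex1 ex2 hA2 es.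
case: (pm1_cases hc1 hc2) => ec.
  move=> _; rewrite ec mulrN opprK => /(_ erefl) e.
  exact: (self_neg hs1 e).
by rewrite ec !mulNr mulrN opprK eqxx.
Qed.

End Core.


Section F3.
Variable F : finFieldType.
Hypothesis pc : 3%N \in [pchar F].

Lemma f3D (a b : 'F_3) : f3toF F (a + b) = f3toF F a + f3toF F b.
Proof.
rewrite /f3toF; have -> : (nat_of_ord (a + b)%R = (nat_of_ord a + nat_of_ord b) %% 3)%N by [].
by rewrite (GRing.natr_mod_pchar pc) natrD.
Qed.

Lemma f3M (a b : 'F_3) : f3toF F (a * b) = f3toF F a * f3toF F b.
Proof.
rewrite /f3toF; have -> : (nat_of_ord (a * b)%R = (nat_of_ord a * nat_of_ord b) %% 3)%N by [].
by rewrite (GRing.natr_mod_pchar pc) natrM.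
Qed.

Lemma f30 : f3toF F 0 = 0. Proof. by []. Qed.

Lemma f3N (a : 'F_3) : f3toF F (- a) = - f3toF F a.
Proof.
apply/eqP; rewrite -addr_eq0 -f3D addrC subrr; exact/eqP.
Qed.

Lemma f3B (a b : 'F_3) : f3toF F (a - b) = f3toF F a - f3toF F b.
Proof. by rewrite f3D f3N. Qed.

Lemma f3_pm1 (a : 'F_3) : a != 0 -> pm1 (f3toF F a).
Proof.
case: a => [[|[|[|k]]] Hk] //= _; rewrite /f3toF /=; first by left.
right; apply: (redE pc (H := 0) (K := 0) (M := 1)) => //; ring.
Qed.

Lemma f3_neq0 (a : 'F_3) : a != 0 -> f3toF F a != 0.
Proof. by move/f3_pm1/pm1_neq0. Qed.

End F3.


Section Code.
Variables (l : nat) (F : finFieldType) (pi : F).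
Hypothesis l1 : (1 <= l)%N.
Hypothesis cardF : #|F| = (3 ^ (2 * l + 1))%N.
Hypothesis prim : (3 ^ (2 * l + 1)).-1.-primitive_root pi.
Local Notation m := (2 * l + 1)%N.
Local Notation n := (3 ^ m).-1.
Local Notation u := ((3 ^ m + 1) %/ 2)%N.
Local Notation v := (2 * 3 ^ l + 1)%N.
Local Notation C := (code_uv n pi u v).
Let pc := pcF cardF.

Definition syn (c : 'rV['F_3]_n) (k : nat) : F :=
  \sum_(i < n) f3toF F (c ord0 i) * pi ^+ (k * i).

Lemma inC c : (c \in C) = (syn c u == 0) && (syn c v == 0).
Proof. by rewrite inE. Qed.

Lemma synB c d k : syn (c - d) k = syn c k - syn d k.
Proof.
by rewrite /syn -sumrB; apply: eq_bigr => i _; rewrite !mxE (f3B pc) mulrBl.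
Qed.

Lemma synZ a c k : syn (a *: c) k = f3toF F a * syn c k.
Proof.
by rewrite /syn mulr_sumr; apply: eq_bigr => i _; rewrite !mxE (f3M pc) mulrA.
Qed.

Lemma syn0 k : syn 0 k = 0.
Proof. by rewrite /syn big1 // => i _; rewrite mxE f30 mul0r. Qed.

Lemma C0 : 0 \in C. Proof. by rewrite inC !syn0 eqxx. Qed.

Lemma CB c d : c \in C -> d \in C -> c - d \in C.
Proof. by rewrite !inC !synB => /andP[/eqP -> /eqP ->] /andP[/eqP -> /eqP ->]; rewrite subrr eqxx. Qed.

Lemma CZ a c : c \in C -> a *: c \in C.
Proof. by rewrite !inC !synZ => /andP[/eqP -> /eqP ->]; rewrite mulr0 eqxx. Qed.

Definition supp (c : 'rV['F_3]_n) := [set i | c ord0 i != 0].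

Lemma syn_supp c k : syn c k = \sum_(i in supp c) f3toF F (c ord0 i) * pi ^+ (k * i).
Proof.
rewrite /syn (bigID (fun i => i \in supp c)) /= [X in _ + X]big1 ?addr0 //.
by move=> i; rewrite inE negbK => /eqP ->; rewrite f30 mul0r.
Qed.

Lemma hamming_sub c d : hamming c d = #|supp (c - d)|.
Proof. by apply: eq_card => i; rewrite !inE !mxE subr_eq0. Qed.

Lemma sum_pair (i j : 'I_n) (G : 'I_n -> F) : i != j ->
  \sum_(x in [set i; j]) G x = G i + G j.
Proof. by move=> ij; rewrite big_setU1 ?inE // big_set1. Qed.

Lemma termu (c : 'rV['F_3]_n) (i : 'I_n) :
  f3toF F (c ord0 i) * pi ^+ (u * i) = f3toF F (c ord0 i) * (-1) ^+ i * pi ^+ i.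
Proof. by rewrite (piu l1 cardF prim) mulrA. Qed.

Lemma termv (c : 'rV['F_3]_n) (i : 'I_n) :
  f3toF F (c ord0 i) * pi ^+ (v * i) = f3toF F (c ord0 i) * (pi ^+ i) ^+ v.
Proof. by rewrite [(v * i)%N]mulnC exprM. Qed.

Lemma sign_pm1 (i : nat) : pm1 ((-1 : F) ^+ i).
Proof. by rewrite -signr_odd; case: (odd i); [right; rewrite expr1 | left]. Qed.

Lemma pi_neq (i j : 'I_n) : i != j -> pi ^+ i != pi ^+ j.
Proof.
move=> ij; apply/negP => /eqP e; move/eqP: ij; apply; apply: val_inj.
exact: (pi_inj prim (ltn_ord i) (ltn_ord j) e).
Qed.

Lemma pix_neq0 (i : nat) : pi ^+ i != 0.
Proof. by rewrite expf_neq0 // (pi_neq0 l1 prim). Qed.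

Lemma wt4 w : w \in C -> w != 0 -> (4 <= #|supp w|)%N.
Proof.
rewrite inC (syn_supp w u) (syn_supp w v) => /andP[/eqP Eu /eqP Ev] nw.
have cpm (i : 'I_n) : i \in supp w -> pm1 (f3toF F (w ord0 i)).
  by rewrite inE => /(f3_pm1 pc).
rewrite leqNgt; apply/negP => lt4.
have : (#|supp w| == 0 \/ #|supp w| == 1 \/ #|supp w| == 2 \/ #|supp w| == 3)%N.
  by move: lt4; case: #|supp w| => [|[|[|[|]]]]; auto.
case=> [/eqP/cards0_eq S0 | [/cards1P [i Si] | [/cards2P [i [j [ij Sij]]] | S3]]].
- move/negP: nw; apply; apply/eqP/rowP => i; rewrite mxE.
  have : i \notin supp w by rewrite S0 inE.
  by rewrite inE negbK => /eqP.
- move: Eu; rewrite Si big_set1 => /eqP; rewrite mulf_eq0 (negbTE (pix_neq0 _)) orbF.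
  by apply/negP; apply: f3_neq0 => //; move: (set11 i); rewrite -Si inE.
- have iS : i \in supp w by rewrite Sij !inE eqxx.
  have jS : j \in supp w by rewrite Sij !inE eqxx orbT.
  move: Eu Ev; rewrite Sij !sum_pair // !termu !termv => Eu Ev.
  apply: (core2 pc (l := l) (pi_neq ij) (pix_neq0 _) (pix_neq0 _) (cpm _ iS) (cpm _ jS)
          (sign_pm1 i) (sign_pm1 j) _ Eu Ev).
  exact: (eta_neg l1 cardF prim).
- have : (0 < #|supp w|)%N by rewrite (eqP S3).
  rewrite card_gt0 => /set0Pn [i iS].
  have : #|supp w :\ i| == 2%N.
    by move: S3; rewrite (cardsD1 i) iS add1n eqSS.
  case/cards2P => j [k [jk Sjk]].
  have jS' : j \in supp w :\ i by rewrite Sjk !inE eqxx.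
  have kS' : k \in supp w :\ i by rewrite Sjk !inE eqxx orbT.
  move: (jS') (kS'); rewrite !inE => /andP[ji jS] /andP[ki kS].
  move: Eu Ev; rewrite !(big_setD1 i iS) Sjk /= !sum_pair // !termu !termv !addrA => Eu Ev.
  have ij : i != j by rewrite eq_sym.
  have ik : i != k by rewrite eq_sym.
  exact: (core3 pc (hfinF cardF) (pi_neq ij) (pi_neq ik) (pi_neq jk) (pix_neq0 _) (pix_neq0 _) (pix_neq0 _)
    (cpm _ iS) (f3_pm1 pc jS) (f3_pm1 pc kS) (sign_pm1 i) (sign_pm1 j) (sign_pm1 k) Eu Ev).
Qed.

End Code.


Section Count.
Variable n : nat.

Definition Dij := [set p : 'I_n * 'I_n | (p.1 < p.2)%N].

Lemma card_Dij : (2 * #|Dij| + n = n * n)%N.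
Proof.
pose Dji := [set p : 'I_n * 'I_n | (p.2 < p.1)%N].
pose Dg := [set p : 'I_n * 'I_n | p.1 == p.2].
have cT : #|[set: 'I_n * 'I_n]| = (n * n)%N by rewrite cardsT card_prod card_ord.
have eC : ~: Dij = Dji :|: Dg.
  apply/setP => -[i j]; rewrite !inE /= -leqNgt leq_eqVlt orbC.
  by rewrite eq_sym; congr (_ || _); apply/eqP/eqP => [/val_inj|->].
have dis : Dji :&: Dg = set0.
  apply/setP => -[i j]; rewrite !inE /=.
  by apply/negP => /andP[lt /eqP e]; move: lt; rewrite e ltnn.
have sw : Dji = (fun p => (p.2, p.1)) @: Dij.
  apply/setP => -[i j]; rewrite !inE /=; apply/idP/imsetP => [lt | [[a b] ab [-> ->]]].
    by exists (j, i); rewrite ?inE.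
  by move: ab; rewrite inE.
have cg : #|Dg| = n.
  have -> : Dg = (fun i => (i, i)) @: [set: 'I_n].
    apply/setP => -[i j]; rewrite !inE /=; apply/eqP/imsetP => [-> | [k _ [-> ->]]] //.
    by eexists; [exact: in_setT | reflexivity].
  by rewrite card_imset ?cardsT ?card_ord // => a b [].
have cji : #|Dji| = #|Dij|.
  by rewrite sw card_imset // => -[a b] [c d] [-> ->].
have := cardsC Dij; rewrite eC cardsU dis cards0 subn0 cji cg ?card_prod ?card_ord ?cT => <-.
by rewrite mul2n -addnn addnA.
Qed.

Lemma card4 (T : finType) (a b c d : T) : (#|a |: (b |: (c |: [set d]))| <= 4)%N.
Proof.
rewrite !cardsU1 cards1.
have := leq_b1 (a \notin (b |: (c |: [set d]))); have := leq_b1 (b \notin (c |: [set d])).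
have := leq_b1 (c \notin [set d]); lia.
Qed.

End Count.

Section Exist.
Variables (l : nat) (F : finFieldType) (pi : F).
Hypothesis l1 : (1 <= l)%N.
Hypothesis cardF : #|F| = (3 ^ (2 * l + 1))%N.
Hypothesis prim : (3 ^ (2 * l + 1)).-1.-primitive_root pi.
Local Notation m := (2 * l + 1)%N.
Local Notation n := (3 ^ m).-1.
Local Notation u := ((3 ^ m + 1) %/ 2)%N.
Local Notation v := (2 * 3 ^ l + 1)%N.
Local Notation C := (code_uv n pi u v).

Definition sg (b : bool) : 'F_3 := if b then 1 else -1.

Lemma sg_neq0 b : sg b != 0. Proof. by case: b. Qed.
Lemma sg_inj : injective sg. Proof. by do 2 case. Qed.

Definition vec (p : ('I_n * 'I_n) * (bool * bool)) : 'rV['F_3]_n :=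
  \row_k (if k == p.1.1 then sg p.2.1 else if k == p.1.2 then sg p.2.2 else 0).

Definition DD := [set p : ('I_n * 'I_n) * (bool * bool) | p.1 \in Dij n].

Lemma supp_vec p : p \in DD -> supp (vec p) = [set p.1.1; p.1.2].
Proof.
case: p => [[i j] [a b]]; rewrite !inE /= => lt.
have ij : i != j by apply/negP => /eqP e; move: lt; rewrite e ltnn.
apply/setP => k; rewrite !inE mxE /=.
case: (k =P i) => [->|_]; first by rewrite sg_neq0.
by case: (k == j); rewrite /= ?sg_neq0 ?eqxx.
Qed.

Lemma vec_inj : {in DD &, injective vec}.
Proof.
move=> [[i j] [a b]] [[i' j'] [a' b']] pD p'D e.
have S := congr1 (@supp l) e; rewrite !supp_vec // in S.
move: pD p'D; rewrite !inE /= => lt lt'.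
have hi : i \in [set i'; j'] by rewrite -S !inE eqxx.
have hj : j \in [set i'; j'] by rewrite -S !inE eqxx orbT.
have hi' : i' \in [set i; j] by rewrite S !inE eqxx.
move: hi hj hi'; rewrite !inE -!(inj_eq val_inj) /= => hi hj hi'.
have ei : nat_of_ord i = nat_of_ord i' by lia.
have ej : nat_of_ord j = nat_of_ord j' by lia.
move/val_inj: ei => ei; move/val_inj: ej => ej; subst i' j'.
have ij : j != i by apply/negP => /eqP ee; move: lt; rewrite ee ltnn.
have ea := congr1 (fun c : 'rV_n => c ord0 i) e.
have eb := congr1 (fun c : 'rV_n => c ord0 j) e.
move: ea eb; rewrite /= !mxE /= eqxx (negbTE ij) eqxx => /sg_inj -> /sg_inj ->.
by [].
Qed.

Lemma card_DD : #|DD| = (#|Dij n| * 4)%N.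
Proof.
have -> : DD = setX (Dij n) [set: bool * bool].
  by apply/setP => p; rewrite !inE andbT.
by rewrite cardsX cardsT card_prod card_bool.
Qed.

Lemma exists_wt4 : exists w, [/\ w \in C, w != 0 & (#|supp w| <= 4)%N].
Proof.
pose g p := (syn pi (vec p) u, syn pi (vec p) v).
case: (boolP [exists p in DD, exists p' in DD, (p != p') && (g p == g p')]).
  case/existsP => p /andP[pD /existsP[p' /andP[p'D /andP[ne /eqP eg]]]].
  exists (vec p - vec p'); split.
  - rewrite inC !(synB pi cardF); case: eg => -> ->; by rewrite !subrr eqxx.
  - rewrite subr_eq0; apply/negP => /eqP e; move/negP: ne; apply; apply/eqP.
    exact: vec_inj.
  - apply: leq_trans (card4 p.1.1 p.1.2 p'.1.1 p'.1.2).
    apply: subset_leq_card; apply/subsetP => k; rewrite !inE; apply: contraR.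
    rewrite !negb_or => /and4P[h1 h2 h3 h4].
    by rewrite !mxE (negbTE h1) (negbTE h2) (negbTE h3) (negbTE h4) subrr.
move=> H.
have inj : {in DD &, injective g}.
  move=> p p' pD p'D e; case: (boolP (p == p')) => [/eqP // | ne]; move/negP: H; case.
  apply/existsP; exists p; rewrite pD /=; apply/existsP; exists p'.
  by rewrite p'D ne e eqxx.
have c1 := card_in_imset inj; have le := max_card (g @: DD).
rewrite c1 card_prod card_DD cardF in le.
have e3 : (3 ^ m = n.+1)%N by rewrite prednK // expn_gt0.
exfalso; have le' : (#|Dij n| * 4 <= n.+1 * n.+1)%N by rewrite -e3.
move: le'; have := card_Dij n; have hn := n_ge l1.
have : (26 * n <= n * n)%N by rewrite leq_mul2r hn orbT.
nia.
Qed.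

End Exist.


Section Dim.
Variables (l : nat) (F : finFieldType) (pi : F).
Hypothesis l1 : (1 <= l)%N.
Hypothesis cardF : #|F| = (3 ^ (2 * l + 1))%N.
Hypothesis prim : (3 ^ (2 * l + 1)).-1.-primitive_root pi.
Local Notation m := (2 * l + 1)%N.
Local Notation n := (3 ^ m).-1.
Local Notation u := ((3 ^ m + 1) %/ 2)%N.
Local Notation v := (2 * 3 ^ l + 1)%N.
Local Notation C := (code_uv n pi u v).
Let pc := pcF cardF.
Local Notation L := (pPrimeCharType pc).

Lemma dimL : \dim {: L} = m.
Proof.
rewrite pprimeChar_dimf.
have -> : #|L| = #|F| by [].
by rewrite cardF pfactorK.
Qed.

Lemma order1 : (#|'F_3| ^ \dim (1%VS : {vspace L}))%N = 3%N.
Proof. by rewrite dimv1 card_Fp. Qed.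

Lemma piu1 : pi ^+ u = - pi.
Proof. by rewrite (u_eq l1) exprD (pih l1 cardF prim) expr1 mulN1r. Qed.

Lemma pow_lt d : (d < m)%N -> (3 ^ d < n)%N.
Proof.
move=> dm; have : (3 ^ d <= 3 ^ (2 * l))%N by rewrite leq_pexp2l //; lia.
rewrite addn1 expnSr; have := expn_gt0 3 (2 * l); lia.
Qed.

Lemma ypow d : (0 < d)%N -> (d < m)%N -> (pi ^+ u) ^+ (3 ^ d) != pi ^+ u.
Proof.
move=> d0 dm; rewrite piu1 (frobN pc) ; apply/negP => /eqP /oppr_inj e.
have e1 : pi ^+ (3 ^ d) = pi ^+ 1 by rewrite expr1.
have := pi_inj prim (pow_lt dm) _ e1; rewrite (leq_trans _ (n_ge l1)) // => /(_ isT) h.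
have d3 : (3 <= 3 ^ d)%N by rewrite -{1}(expn1 3) leq_pexp2l.
lia.
Qed.

Lemma zpow d : (0 < d)%N -> (d %| m)%N -> (d < m)%N -> (pi ^+ v) ^+ (3 ^ d) != pi ^+ v.
Proof.
move=> d0 dd dm; apply/negP => /eqP e.
have k0 : (0 < 3 ^ d)%N by rewrite expn_gt0.
have e1 : (pi ^+ v) ^+ (3 ^ d).-1 = 1.
  apply: (mulIf (pix_neq0 l1 prim v)); rewrite mul1r -exprSr prednK //.
have : (n %| v * (3 ^ d).-1)%N by rewrite (prim_order_dvd prim) exprM e1.
have dl : (d <= l)%N.
  case/dvdnP: dd => k hk.
  have k3 : (3 <= k)%N.
    case: k hk => [|[|[|k]]] //=; lia.
  have : (3 * d <= k * d)%N by rewrite leq_mul2r k3 orbT.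
  lia.
have Q3 : (3 ^ d <= 3 ^ l)%N by rewrite leq_pexp2l.
have d3 : (3 <= 3 ^ d)%N by rewrite -{1}(expn1 3) leq_pexp2l.
have em : (3 ^ m = 3 * 3 ^ l * 3 ^ l)%N by rewrite addn1 expnSr mul2n -addnn expnD; lia.
move/dvdn_leq; rewrite em; have := expn_gt0 3 l; nia.
Qed.

Lemma adjoin_full (x : L) :
  (forall d, (0 < d)%N -> (d %| m)%N -> (d < m)%N -> x ^+ (3 ^ d) != x) ->
  <<1; x>>%VS = fullv.
Proof.
move=> H; pose K := <<1; x>>%AS.
have dK : (\dim K %| m)%N by rewrite -dimL field_dimS // subvf.
have Fm : x ^+ (3 ^ \dim K) == x.
  by have := Fermat's_little_theorem K x; rewrite memv_adjoin /= card_Fp.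
have dm : (m <= \dim K)%N.
  rewrite leqNgt; apply/negP => lt.
  by move: Fm; apply/negP; apply: H => //; exact: adim_gt0.
by apply/eqP; rewrite eqEdim subvf dimL.
Qed.

Definition yL : L := pi ^+ u.
Definition zL : L := pi ^+ v.

Lemma y_full : <<1; yL>>%VS = fullv.
Proof. by apply: adjoin_full => d d0 _ dm; exact: ypow. Qed.

Lemma z_full : <<1; zL>>%VS = fullv.
Proof. by apply: adjoin_full => d d0 dd dm; exact: zpow. Qed.

Definition mu := minPoly 1 yL.

Lemma muOver : mu \is a polyOver 1%VS.
Proof. exact: minPolyOver. Qed.

Lemma mu_y : mu.[yL] = 0.
Proof. exact: minPolyxx. Qed.

Lemma size_mu : size mu = m.+1.
Proof.
rewrite size_minPoly adjoin_degreeE dimv1 divn1.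
by have := y_full; rewrite /= => ->; rewrite dimL.
Qed.

Lemma mu_z : mu.[zL] != 0.
Proof.
apply/negP => /eqP hz.
have r : root mu zL by rewrite /root hz.
have /and3P[_ _ nE] := finField_galois (sub1v (fullv : {aspace L})).
have [x xG exy] := normalField_root_minPoly (sub1v _) nE (memvf yL) r.
have [alpha gen Dalpha] := finField_galois_generator (sub1v (fullv : {aspace L})).
move: xG exy; rewrite (eqP gen) => /cycleP [j ->] exy.
have pw k : (alpha ^+ k)%g yL = yL ^+ (3 ^ k).
  elim: k => [|k IH]; first by rewrite expg0 gal_id expr1.
  rewrite expgSr galM ?memvf // IH Dalpha ?memvf //= order1.
  by rewrite -exprM expnSr.
apply: (nonconj l1 cardF prim); exists j.
by rewrite -pw exy.
Qed.

Definition f3of (x : F) : 'F_3 := odflt 0 [pick a : 'F_3 | f3toF F a == x].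

Lemma f3ofK (x : L) : x \in (1%VS : {vspace L}) -> f3toF F (f3of x) = x.
Proof.
case/vlineP => k ->; rewrite /f3of; case: pickP => [a /eqP e | H] /=.
  by rewrite e.
by move: (H k); rewrite /f3toF; change (k *: (1 : L)) with ((k : nat)%:R * (1 : F)); rewrite mulr1 eqxx.
Qed.

Lemma xn1 (x : F) (k : nat) : x = pi ^+ k -> x ^+ n = 1.
Proof. by move=> ->; rewrite exprAC (pin prim) expr1n. Qed.

Lemma reduce (P : {poly L}) : P \is a polyOver 1%VS ->
  exists c : 'rV['F_3]_n, syn pi c u = P.[yL] /\ syn pi c v = P.[zL].
Proof.
move=> PO.
pose D : {poly L} := 'X^n - 1.
have DO : D \is a polyOver 1%VS by rewrite rpredB ?rpredX ?polyOverX ?rpred1.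
pose R := P %% D.
have RO : R \is a polyOver 1%VS by apply: modp_polyOver.
have n0 : (0 < n)%N by have := n_ge l1; lia.
have sD : size D = n.+1 by rewrite /D -polyC1 size_XnsubC.
have sR : (size R <= n)%N.
  have : (size R < size D)%N by rewrite ltn_modp -size_poly_eq0 sD.
  by rewrite sD.
have ev (x : L) : x ^+ n = 1 -> P.[x] = R.[x].
  move=> hx; rewrite {1}(divp_eq P D) hornerD hornerM /D !hornerE.
  by rewrite hx subrr mulr0 add0r.
pose c := \row_(i < n) f3of R`_i.
have sc (x : L) (k : nat) : x = pi ^+ k -> syn pi c k = R.[x].
  move=> ->; rewrite (horner_coef_wide _ sR) /syn; apply: eq_bigr => i _.
  rewrite mxE f3ofK; last by move/polyOverP: RO; apply.
  by rewrite exprM.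
exists c; split.
  by rewrite (sc yL u) // ev //; apply: (xn1 (k := u)).
by rewrite (sc zL v) // ev //; apply: (xn1 (k := v)).
Qed.

Lemma surj (a b : F) : exists c : 'rV['F_3]_n, syn pi c u = a /\ syn pi c v = b.
Proof.
have : (a : L) \in <<1; yL>>%VS by rewrite y_full memvf.
case/Fadjoin_polyP => P1 P1O ha.
have : ((b - P1.[zL]) / mu.[zL] : L) \in <<1; zL>>%VS by rewrite z_full memvf.
case/Fadjoin_polyP => Q QO hq.
have PO : P1 + mu * Q \is a polyOver 1%VS by rewrite rpredD // rpredM // muOver.
case: (reduce PO) => c [hu hv]; exists c; split.
  by rewrite hu hornerD hornerM mu_y mul0r addr0 ha.
by rewrite hv hornerD hornerM -hq mulrC divfK ?mu_z // addrC subrK.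
Qed.

End Dim.


Lemma pow3_ge k : (2 * k + 1 <= 3 ^ k)%N.
Proof. elim: k => [|k IH] //; rewrite expnS; lia. Qed.

Section Card.
Variables (l : nat) (F : finFieldType) (pi : F).
Hypothesis l1 : (1 <= l)%N.
Hypothesis cardF : #|F| = (3 ^ (2 * l + 1))%N.
Hypothesis prim : (3 ^ (2 * l + 1)).-1.-primitive_root pi.
Local Notation m := (2 * l + 1)%N.
Local Notation n := (3 ^ m).-1.
Local Notation u := ((3 ^ m + 1) %/ 2)%N.
Local Notation v := (2 * 3 ^ l + 1)%N.
Local Notation C := (code_uv n pi u v).
Let pc := pcF cardF.

Lemma synD (c d : 'rV['F_3]_n) k : syn pi (c + d) k = syn pi c k + syn pi d k.
Proof.
by rewrite /syn -big_split; apply: eq_bigr => i _; rewrite !mxE (f3D pc) mulrDl.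
Qed.

Lemma CD c d : c \in C -> d \in C -> c + d \in C.
Proof.
by rewrite !inC !synD => /andP[/eqP -> /eqP ->] /andP[/eqP -> /eqP ->]; rewrite addr0 eqxx.
Qed.

Lemma eqP_h (x y : F) : y = x -> (x == y) = true.
Proof. by move=> ->; rewrite eqxx. Qed.

Definition S (c : 'rV['F_3]_n) := (syn pi c u, syn pi c v).

Definition pre (w : F * F) : 'rV['F_3]_n :=
  odflt 0 [pick c : 'rV['F_3]_n | (syn pi c u == w.1) && (syn pi c v == w.2)].

Lemma preP w : S (pre w) = w.
Proof.
rewrite /pre; case: pickP => [c /andP[/eqP h1 /eqP h2] | H] /=.
  by rewrite /S h1 h2; case: w h1 h2.
have [c [h1 h2]] := surj l1 cardF prim w.1 w.2.
by move: (H c); rewrite h1 h2 !eqxx.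
Qed.

Lemma cardC : #|C| = (3 ^ (n - 2 * m))%N.
Proof.
pose g (c : 'rV['F_3]_n) := (c - pre (S c), S c).
have ginj : injective g.
  move=> c d e.
  have eS : S c = S d := congr1 snd e.
  have e1 : c - pre (S c) = d - pre (S d) := congr1 fst e.
  by move: e1; rewrite eS => /addIr.
have im : g @: [set: 'rV['F_3]_n] = setX C [set: F * F].
  apply/setP => -[w s]; rewrite in_setX in_setT andbT; apply/imsetP/idP => [[c _ e] | wC].
    have -> : w = c - pre (S c) := congr1 fst e.
    have hp := preP (S c).
    have h1 := congr1 fst hp; have h2 := congr1 snd hp; rewrite /= in h1 h2.
    by rewrite inC !(synB pi cardF) h1 h2 !subrr eqxx.
  exists (w + pre s); rewrite ?inE //.
  have eS : S (w + pre s) = s.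
    move: wC; rewrite inC /S !synD => /andP[/eqP -> /eqP ->].
    by rewrite !add0r -[in RHS](preP s).
  by rewrite /g eS addrK.
have := card_imset [set: 'rV['F_3]_n] ginj.
rewrite im cardsX !cardsT card_mx card_Fp // mul1n card_prod cardF.
have e2 : (3 ^ n = 3 ^ (n - 2 * m) * (3 ^ m * 3 ^ m))%N.
  rewrite -expnD -expnD addnn -mul2n subnK //.
  have := pow3_ge m; lia.
rewrite e2 => /eqP; rewrite eqn_pmul2r ?muln_gt0 ?expn_gt0 // => /eqP.
by move=> ->.
Qed.

Lemma dimC : code_dim C = (n - 2 * m)%N.
Proof.
rewrite /code_dim; set V := <<enum C>>%VS.
have memV x : (x \in V) = (x \in C).
  apply/idP/idP => [xV | xC]; last by apply: memv_span; rewrite mem_enum.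
  rewrite (coord_span xV); apply: (big_ind (fun y => y \in C)) => [|a b|i _].
  - exact: C0.
  - exact: CD.
  - apply: (CZ cardF); have : (i < size (enum C))%N by rewrite -cardE ltn_ord.
    by move/(mem_nth 0); rewrite mem_enum.
have := card_vspace V; rewrite card_Fp //.
have -> : #|V| = #|C| by apply: eq_card => x; rewrite memV.
rewrite cardC => /eqP; rewrite eqn_exp2l // => /eqP.
by move=> <-.
Qed.

End Card.


Unset Implicit Arguments.

Theorem theorem1 (l : nat) (F : finFieldType) (pi : F) :
  (1 <= l)%N ->
  #|F| = (3 ^ (2 * l + 1))%N ->
  (3 ^ (2 * l + 1)).-1.-primitive_root pi ->
  let m := (2 * l + 1)%N in
  let u := ((3 ^ m + 1) %/ 2)%N in
  let v := (2 * 3 ^ l + 1)%N in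
  let n := (3 ^ m).-1 in
  ~ conjugate3 (pi ^+ u) (pi ^+ v) /\
  code_dim (code_uv n pi u v) = (n - 2 * m)%N /\
  min_dist_is (code_uv n pi u v) 4.
Proof.
move=> l1 cardF prim m u v n.
split; first exact: (nonconj l1 cardF prim).
split; first exact: (dimC l1 cardF prim).
split.
- have [w [wC nw sw]] := exists_wt4 l1 cardF prim.
  exists w, 0; split => //; first exact: C0.
  rewrite hamming_sub subr0; apply/eqP; rewrite eqn_leq sw.
  exact: (wt4 l1 cardF prim wC nw).
- move=> c d cC dC ncd; rewrite hamming_sub.
  apply: (wt4 l1 cardF prim (CB cardF cC dC)).
  by rewrite subr_eq0.
Qed.
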